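(* Fix $k\in\{0,1,\infty\}$ and let $\mathbb{L}=\{L\in\mathbb{R}^{n_x\times n_y}:\rho(A-LC)<1\}$. For every $L\in\mathbb{L}$, $$J_k(L)=\max\Big\{\lambda\in\mathbb{R}_+:\ \tfrac12 D_a^\top\Phi(k,L)^\top\Sigma_{r_\omega}^{-1}(L)\Phi(k,L)D_a-\lambda D_a^\top W D_a\succeq 0\Big\}.$$ Consequently, the observer design problem $\max_{L\in\mathbb{R}^{n_x\times n_y}}\{J_k(L):\rho(A-LC)<1\}$ can be reformulated as the joint problem $$\max_{L\in\mathbb{R}^{n_x\times n_y},\ \lambda\in\mathbb{R}_+}\ \lambda\quad\text{s.t.}\quad \tfrac12 D_a^\top\Phi(k,L)^\top\Sigma_{r_\omega}^{-1}(L)\Phi(k,L)D_a-\lambda D_a^\top W D_a\succeq 0,\qquad \rho(A-LC)<1,$$ which has the same optimal value.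
   Context: Consider the discrete-time system $x(k+1)=Ax(k)+Bu(k)+B_\omega\omega(k)$, $y(k)=Cx(k)+D_\omega\omega(k)+y_a(k)$, with $x(k)\in\mathbb{R}^{n_x}$, $y(k)\in\mathbb{R}^{n_y}$, $\omega(k)\in\mathbb{R}^{n_\omega}$ i.i.d. Gaussian $\mathcal N(0,I)$, $(A,C)$ detectable and $(A,B_\omega)$ stabilizable. An observer $\hat x(k+1)=A\hat x(k)+Bu(k)+L(y(k)-C\hat x(k))$ with gain $L\in\mathbb{R}^{n_x\times n_y}$ produces the residual $r(k)=y(k)-C\hat x(k)$. The attack is $y_a(k)=0$ for $k<0$ and $y_a(k)=D_a\bar a$ for $k\ge 0$, where $\bar a\in\mathbb{R}^{n_a}$ and $D_a\in\mathbb{R}^{n_y\times n_a}$ has entries $(j_i,i)=1$ for the indices $j_1<\dots<j_{n_a}$ of compromised sensors and all other entries $0$. $W\in\mathbb{R}^{n_y\times n_y}$ is symmetric positive semidefinite. $\rho(\cdot)$ is the spectral radius and $\mathbb{R}_+$ the positive reals. For $L$ with $\rho(A-LC)<1$, $\Sigma_{\tilde x}(L)$ is the solution of $\Sigma=(A-LC)\Sigma(A-LC)^\top+(B_\omega-LD_\omega)(B_\omega-LD_\omega)^\top$ and $\Sigma_{r_\omega}(L)=C\Sigma_{\tilde x}(L)C^\top+D_\omega D_\omega^\top$ (assumed invertible where its inverse appears). Define $\Phi(0,L)=I$, $\Phi(k,L)=I-C\sum_{l=0}^{k-1}(A-LC)^{k-l-1}L$ for $k\ge1$, and $\Phi(\infty,L)=\lim_{k\to\infty}\Phi(k,L)=I-C(I-A+LC)^{-1}L$.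 Define $$J_k(L)=\min_{\bar a\in\mathbb{R}^{n_a}}\ \tfrac12\bar a^\top D_a^\top\Phi(k,L)^\top\Sigma_{r_\omega}^{-1}(L)\Phi(k,L)D_a\bar a\quad\text{s.t.}\quad \bar a^\top D_a^\top W D_a\bar a\ge 1,$$ the smallest Kullback–Leibler divergence between attacked and attack-free residuals at time $k$ over attacks of impact at least $1$. *)

(* Defs.v *)
From HB Require Import structures.
From mathcomp Require Import all_boot all_order all_algebra.
From mathcomp Require Import complex.
From mathcomp Require Import boolp classical_sets reals constructive_ereal ereal.
Set Implicit Arguments. Unset Strict Implicit. Unset Printing Implicit Defensive.
Import Order.TTheory GRing.Theory Num.Theory.
Local Open Scope ring_scope.
Local Open Scope complex_scope.

Section Defs.
Variable R : realType.

Definition cmx {m n} (M : 'M[R]_(m, n)) : 'M[R[i]]_(m, n) :=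
  map_mx (fun x : R => x%:C) M.

Definition spec_rad_lt1 {n} (M : 'M[R]_n) : Prop :=
  forall z : R[i], eigenvalue (cmx M) z -> `|z| < 1.

Definition detectable {nx ny} (A : 'M[R]_nx) (C : 'M[R]_(ny, nx)) : Prop :=
  forall z : R[i], 1 <= `|z| -> \rank (col_mx (cmx A - z%:M) (cmx C)) = nx.

Definition stabilizable {nx nw} (A : 'M[R]_nx) (B : 'M[R]_(nx, nw)) : Prop :=
  forall z : R[i], 1 <= `|z| -> \rank (row_mx (cmx A - z%:M) (cmx B)) = nx.

Definition psd {n} (M : 'M[R]_n) : Prop :=
  forall v : 'cV[R]_n, 0 <= (v^T *m M *m v) 0 0.

Definition Sigma_x {nx ny nw} (A : 'M[R]_nx) (C : 'M[R]_(ny, nx))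
  (Bw : 'M[R]_(nx, nw)) (Dw : 'M[R]_(ny, nw)) (L : 'M[R]_(nx, ny)) : 'M[R]_nx :=
  xget 0 [set S : 'M[R]_nx | S = (A - L *m C) *m S *m (A - L *m C)^T
                                 + (Bw - L *m Dw) *m (Bw - L *m Dw)^T].

Definition Sigma_r {nx ny nw} (A : 'M[R]_nx) (C : 'M[R]_(ny, nx))
  (Bw : 'M[R]_(nx, nw)) (Dw : 'M[R]_(ny, nw)) (L : 'M[R]_(nx, ny)) : 'M[R]_ny :=
  C *m Sigma_x A C Bw Dw L *m C^T + Dw *m Dw^T.

Inductive time := TFin of nat | TInf.

Definition Phi {nx ny} (A : 'M[R]_nx) (C : 'M[R]_(ny, nx)) (k : time)
  (L : 'M[R]_(nx, ny)) : 'M[R]_ny :=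
  match k with
  | TFin 0 => 1%:M
  | TFin k => 1%:M - C *m (\sum_(l < k) (A - L *m C) ^+ (k - l - 1) *m L)
  | TInf => 1%:M - C *m invmx (1%:M - A + L *m C) *m L
  end.

(* D_a for compromised sensors j_1 < ... < j_na, given as j : 'I_na -> 'I_ny *)
Definition Da {ny na} (j : 'I_na -> 'I_ny) : 'M[R]_(ny, na) :=
  \matrix_(r, i) (r == j i)%:R.

Definition Qmat {nx ny nw na} (A : 'M[R]_nx) (C : 'M[R]_(ny, nx))
  (Bw : 'M[R]_(nx, nw)) (Dw : 'M[R]_(ny, nw)) (j : 'I_na -> 'I_ny) (k : time)
  (L : 'M[R]_(nx, ny)) : 'M[R]_na :=
  2^-1 *: ((Da j)^T *m (Phi A C k L)^T *m invmx (Sigma_r A C Bw Dw L)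
            *m Phi A C k L *m Da j).

(* J_k(L) = inf { (1/2) a^T D^T Phi^T Sigma^-1 Phi D a | a^T D^T W D a >= 1 }
   (value +oo when the feasible set is empty) *)
Definition Jk {nx ny nw na} (A : 'M[R]_nx) (C : 'M[R]_(ny, nx))
  (Bw : 'M[R]_(nx, nw)) (Dw : 'M[R]_(ny, nw)) (W : 'M[R]_ny)
  (j : 'I_na -> 'I_ny) (k : time) (L : 'M[R]_(nx, ny)) : \bar R :=
  ereal_inf [set ((a^T *m Qmat A C Bw Dw j k L *m a) 0 0)%:E
            | a in [set a : 'cV[R]_na | 1 <= (a^T *m ((Da j)^T *m W *m Da j) *m a) 0 0]].

Definition Jlmi {nx ny nw na} (A : 'M[R]_nx) (C : 'M[R]_(ny, nx))
  (Bw : 'M[R]_(nx, nw)) (Dw : 'M[R]_(ny, nw)) (W : 'M[R]_ny)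
  (j : 'I_na -> 'I_ny) (k : time) (L : 'M[R]_(nx, ny)) : \bar R :=
  ereal_sup [set lam%:E | lam in [set lam : R | 0 <= lam /\
     psd (Qmat A C Bw Dw j k L - lam *: ((Da j)^T *m W *m Da j))]].

End Defs.

(* Main.v *)
Require Import Defs.
From HB Require Import structures.
From mathcomp Require Import all_boot all_order all_algebra.
From mathcomp Require Import complex.
From mathcomp Require Import boolp classical_sets reals constructive_ereal ereal.
From mathcomp Require Import lra.
Import Order.TTheory GRing.Theory Num.Theory.
Local Open Scope ring_scope.


Section RealSeq.
Variable R : realType.

Lemma bernoulli_ge (h : R) (m : nat) : 0 <= h -> m%:R * h <= (1 + h) ^+ m.
Proof.
move=> h0; elim: m => [|m IH]; first by rewrite mul0r expr0.
rewrite exprS -natr1 mulrDl mul1r.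
have hp : 1 <= (1 + h) ^+ m by apply: exprn_ege1; lra.
have : (1 + h) * (1 + h) ^+ m = (1 + h) ^+ m + h * (1 + h) ^+ m by rewrite mulrDl mul1r.
move=> ->.
have : h <= h * (1 + h) ^+ m by rewrite -{1}(mulr1 h) ler_wpM2l.
lra.
Qed.

Lemma pow_small (r K d : R) : 0 <= r < 1 -> 0 <= K -> 0 < d ->
  exists m0 : nat, forall m, (m0 <= m)%N -> r ^+ m * K <= d.
Proof.
move=> /andP[r0 r1] K0 d0.
have [->|rn0] := eqVneq r 0.
  exists 1%N => m m1; rewrite expr0n; case: m m1 => //= m _; lra.
have rp : 0 < r by rewrite lt0r rn0.
set h := r^-1 - 1.
have hp : 0 < h by rewrite /h subr_gt0 invf_gt1.
exists (Num.Def.archi_bound (K / (d * h))) => m hm.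
have B := @archi_boundP R (K / (d * h)) (divr_ge0 K0 (ltW (mulr_gt0 d0 hp))).
have Bm : (Num.Def.archi_bound (K / (d * h)))%:R <= m%:R :> R by rewrite ler_nat.
have e1 : K <= m%:R * h * d.
  have : K / (d * h) < m%:R by lra.
  rewrite ltr_pdivrMr ?mulr_gt0 //; lra.
have e2 := @bernoulli_ge h m (ltW hp).
have e3 : 1 + h = r^-1 by rewrite /h; lra.
rewrite e3 in e2.
have rm : 0 < r ^+ m by apply: exprn_gt0.
have : K <= r^-1 ^+ m * d.
  apply: (le_trans e1); rewrite ler_wpM2r //; lra.
rewrite exprVn => H.
have H2 : r ^+ m * K <= r ^+ m * ((r ^+ m)^-1 * d) by rewrite ler_wpM2l // ltW.
by rewrite mulrA mulfV ?mul1r in H2 => //; rewrite gt_eqF.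
Qed.

Definition cv0 (a : nat -> R) := forall e, 0 < e -> exists N0, forall N, (N0 <= N)%N -> a N <= e.

Lemma seq_dec (a t : nat -> R) (r : R) : 0 <= r < 1 -> (forall N, 0 <= a N) ->
  (forall N, a N.+1 <= r * a N + t N) -> cv0 t -> cv0 a.
Proof.
move=> /andP[r0 r1] a0 rec tc e e0.
have [N0 HN0] := tc (e * (1 - r) / 2) ltac:(apply: divr_gt0 => //; apply: mulr_gt0; lra).
have key : forall m, a (N0 + m)%N - e / 2 <= r ^+ m * (a N0 - e / 2).
  elim => [|m IH]; first by rewrite addn0 expr0 mul1r.
  rewrite addnS exprS -mulrA.
  have := rec (N0 + m)%N; have := HN0 (N0 + m)%N (leq_addr _ _).
  have : r * (a (N0 + m)%N - e / 2) <= r * (r ^+ m * (a N0 - e / 2)) by rewrite ler_wpM2l.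
  nra.
have [m0 Hm0] := @pow_small r (a N0) (e / 2) (ltac:(apply/andP; split => //)) (a0 N0) ltac:(lra).
exists (N0 + m0)%N => N HN.
have -> : N = (N0 + (N - N0))%N by rewrite subnKC // (leq_trans (leq_addr _ _) HN).
have := key (N - N0)%N.
have := Hm0 (N - N0)%N ltac:(by rewrite leq_subRL ?(leq_trans (leq_addr _ _) HN)).
have : 0 <= r ^+ (N - N0) by apply: exprn_ge0.
nra.
Qed.
End RealSeq.
Arguments cv0 {R}.



Section Cplx.
Variable R : realType.
Local Notation C := (R[i]).
Definition nr (z : C) : R := complex.Re `|z|.

Lemma normE (z : C) : `|z| = (nr z)%:C%C.
Proof. by rewrite /nr normc_def. Qed.

Lemma nr_ge0 z : 0 <= nr z.
Proof. have := normr_ge0 z; rewrite normE. by rewrite -(rmorph0 (real_complex R)) lecR. Qed.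

Lemma nr_add x y : nr (x + y) <= nr x + nr y.
Proof. by rewrite -lecR rmorphD /= -!normE ler_normD. Qed.

Lemma nr_mul x y : nr (x * y) = nr x * nr y.
Proof. by apply: complexI; rewrite rmorphM /= -!normE normrM. Qed.

Lemma nr_lt1 z : `|z| < 1 -> nr z < 1.
Proof. by rewrite normE -ltcR. Qed.

Lemma nr0 : nr 0 = 0.
Proof. by apply: complexI; rewrite -normE normr0. Qed.

Lemma scal_cv0 (s t : nat -> C) (z : C) : `|z| < 1 ->
  (forall N, s N.+1 = z * s N + t N) -> cv0 (fun N => nr (t N)) -> cv0 (fun N => nr (s N)).
Proof.
move=> z1 rec tc; apply: (@seq_dec R _ _ (nr z)) => //.
- by rewrite nr_ge0 nr_lt1.
- by move=> N; apply: nr_ge0.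
- by move=> N; rewrite rec -nr_mul; apply: nr_add.
- exact: tc.
Qed.

Lemma cv0_all n (f : 'I_n -> nat -> R) : (forall i, cv0 (f i)) ->
  forall e, 0 < e -> exists N0, forall N, (N0 <= N)%N -> forall i, f i N <= e.
Proof.
move=> H e e0.
have/choice [g Hg] : forall i, exists N0, forall N, (N0 <= N)%N -> f i N <= e.
  by move=> i; apply: H.
exists (\max_i g i)%N => N HN i; apply: Hg.
by apply: leq_trans HN; apply: leq_bigmax.
Qed.

Lemma vec_cv0 n (M : 'M[C]_n.+1) (rs : seq C) : (forall z, z \in rs -> `|z| < 1) ->
  forall w : 'rV[C]_n.+1, w *m \prod_(z <- rs) (M - z%:M) = 0 ->
  forall i, cv0 (fun N => nr ((w *m M ^+ N) 0 i)).
Proof.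
elim: rs => [|z rs IH] Hrs w.
  rewrite big_nil mulmx1 => -> i e e0; exists 0%N => N _.
  by rewrite mul0mx mxE nr0 ltW.
rewrite big_cons => Hw i.
set w' := w *m (M - z%:M).
have Hw' : w' *m \prod_(z <- rs) (M - z%:M) = 0 by rewrite /w' -mulmxA mulmxE.
have IH' := IH (fun y hy => Hrs y (@mem_behead _ (z :: rs) y hy)) w' Hw' i.
apply: (@scal_cv0 _ (fun N => (w' *m M ^+ N) 0 i) z) => //.
  by apply: Hrs; rewrite mem_head.
move=> N.
have -> : w *m M ^+ N.+1 = (w' + z *: w) *m M ^+ N.
  by rewrite /w' mulmxBr mul_mx_scalar subrK exprS -mulmxE mulmxA.
by rewrite mulmxDl -scalemxAl !mxE addrC.
Qed.
End Cplx.
Arguments nr {R}.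



Section Stab.
Variable R : realType.

Lemma cmx_mul m n p (A : 'M[R]_(m, n)) (B : 'M[R]_(n, p)) : cmx (A *m B) = cmx A *m cmx B.
Proof. exact: (map_mxM (real_complex R)). Qed.

Lemma cmx_exp n (F : 'M[R]_n.+1) N : cmx (F ^+ N) = cmx F ^+ N.
Proof.
elim: N => [|N IH]; first by rewrite !expr0; apply/matrixP => i j; rewrite !mxE; case: (i == j).
by rewrite !exprS -!mulmxE cmx_mul IH.
Qed.

Lemma stab_cv0 n (F : 'M[R]_n.+1) : spec_rad_lt1 F ->
  forall (x : 'rV[R]_n.+1) i, cv0 (fun N => `|(x *m F ^+ N) 0 i|).
Proof.
move=> HF x i.
set M := cmx F.
have [rs Hrs] := closed_field_poly_normal (char_poly M).
have mon := char_poly_monic M.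
rewrite (monicP mon) scale1r in Hrs.
have Hz : forall z, z \in rs -> `|z| < 1.
  move=> z zin; apply: HF; rewrite eigenvalue_root_char Hrs root_prod_XsubC //.
have HP : \prod_(z <- rs) (M - z%:M) = 0.
  have := Cayley_Hamilton M; rewrite Hrs rmorph_prod.
  by under eq_bigr do rewrite rmorphB /= horner_mx_X horner_mx_C.
have := @vec_cv0 R n M rs Hz (cmx x) ltac:(by rewrite HP mulmx0) i.
move=> H e e0; have [N0 HN] := H e e0; exists N0 => N /HN.
rewrite -cmx_exp -cmx_mul /cmx mxE.
suff -> : forall a : R, nr (a%:C%C) = `|a| by [].
move=> a; apply: complexI; rewrite -normE.
by rewrite normc_def /= expr0n /= addr0 sqrtr_sqr.
Qed.
End Stab.



Section Lyap.
Variable R : realType.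

Definition qf n (X : 'M[R]_n) (y : 'rV[R]_n) := (y *m X *m y^T) 0 0.
Arguments qf {n}.

Lemma qf_bound n (X : 'M[R]_n) (y : 'rV[R]_n) d : 0 <= d ->
  (forall i, `|y 0 i| <= d) -> `|qf X y| <= d * d * \sum_j \sum_k `|X k j|.
Proof.
move=> d0 Hy; rewrite /qf mxE.
rewrite mulr_sumr; apply: (le_trans (ler_norm_sum _ _ _)); apply: ler_sum => j _.
rewrite !mxE normrM.
have A : `|\sum_k y 0 k * X k j| <= d * \sum_k `|X k j|.
  rewrite mulr_sumr; apply: (le_trans (ler_norm_sum _ _ _)); apply: ler_sum => k _.
  by rewrite normrM ler_wpM2r ?Hy.
have -> : d * d * \sum_k `|X k j| = (d * \sum_k `|X k j|) * d by rewrite mulrAC.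
by apply: ler_pM => //; apply: Hy.
Qed.

Lemma qf_dec n (F X : 'M[R]_n) m (P : 'M[R]_(n, m)) :
  X = F *m X *m F^T + P *m P^T -> forall y, qf X (y *m F) <= qf X y.
Proof.
move=> HX y.
have E : y *m X *m y^T = (y *m F) *m X *m (y *m F)^T + (y *m P) *m (y *m P)^T.
  by rewrite {1}HX mulmxDr mulmxDl !trmx_mul !mulmxA.
rewrite /qf E; set a := (y *m F *m X *m (y *m F)^T); set b := y *m P *m _.
rewrite [(a + b) 0 0]mxE lerDl /b mxE; apply: sumr_ge0 => k _.
by rewrite [(y *m P)^T k 0]mxE -expr2 sqr_ge0.
Qed.

Lemma lyap_psd n (F X : 'M[R]_n) m (P : 'M[R]_(n, m)) : spec_rad_lt1 F ->
  X = F *m X *m F^T + P *m P^T -> forall x : 'rV_n, 0 <= qf X x.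
Proof.
case: n F X P => [|n] F X P HF HX x.
  by rewrite /qf mxE big_ord0.
have decN : forall N, qf X (x *m F ^+ N) <= qf X x.
  elim=> [|N IH]; first by rewrite expr0 mulmx1.
  rewrite exprSr -mulmxE mulmxA; apply: le_trans IH; exact: (@qf_dec _ F X _ P HX).
set K := \sum_j \sum_k `|X k j|.
have K0 : 0 <= K by apply: sumr_ge0 => j _; apply: sumr_ge0 => k _.
have key : forall e, 0 < e -> - e <= qf X x.
  move=> e e0.
  set d := Num.min 1 (e / (K + 1)).
  have eK : 0 < e / (K + 1) by apply: divr_gt0 => //; lra.
  have d0 : 0 < d by rewrite /d lt_min ltr01 eK.
  have d1 : d <= 1 by rewrite /d ge_min lexx.
  have d2 : d <= e / (K + 1) by rewrite /d ge_min lexx orbT.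
  have [N0 HN] := @cv0_all R _ (fun i N => `|(x *m F ^+ N) 0 i|) (fun i => @stab_cv0 R _ F HF x i) d d0.
  have := @qf_bound _ X (x *m F ^+ N0) d (ltW d0) (HN N0 (leqnn _)).
  have := decN N0.
  have dK : d * K <= e.
    have h1 : d * K <= e / (K + 1) * K by rewrite ler_wpM2r.
    have h2 : e / (K + 1) * (K + 1) = e by rewrite mulfVK //; apply/eqP; lra.
    have h3 : 0 <= e / (K + 1) by exact: ltW.
    nra.
  rewrite ler_norml => H1 /andP[H2 _].
  have : d * d * K <= d * K by rewrite ler_wpM2r //; nra.
  rewrite -/K in H2; lra.
case: (leP 0 (qf X x)) => // hlt.
have := key (- qf X x / 2) ltac:(lra).
lra.
Qed.
End Lyap.



Section Forms.
Variable R : realType.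

Lemma form_inv_psd n (S : 'M[R]_n) : S \in unitmx ->
  (forall y : 'cV_n, 0 <= (y^T *m S *m y) 0 0) ->
  forall u : 'cV_n, 0 <= (u^T *m invmx S *m u) 0 0.
Proof.
move=> Su HS u.
set y := invmx S *m u.
have -> : u = S *m y by rewrite /y mulKVmx.
clearbody y.
have -> : (S *m y)^T *m invmx S *m (S *m y) = y^T *m S^T *m y.
  by rewrite trmx_mul -mulmxA mulKmx.
have -> : (y^T *m S^T *m y) 0 0 = ((y^T *m S^T *m y)^T) 0 0 by rewrite [RHS]mxE.
by rewrite !trmx_mul !trmxK !mulmxA.
Qed.

Lemma sqform_ge0 n m (B : 'M[R]_(n, m)) (y : 'cV_n) : 0 <= (y^T *m (B *m B^T) *m y) 0 0.
Proof.
have -> : y^T *m (B *m B^T) *m y = (y^T *m B) *m (y^T *m B)^T.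
  by rewrite !trmx_mul trmxK !mulmxA.
rewrite mxE; apply: sumr_ge0 => k _.
by rewrite [(y^T *m B)^T k 0]mxE -expr2 sqr_ge0.
Qed.

Lemma Sigma_r_psd nx ny nw (A : 'M[R]_nx) (C : 'M[R]_(ny, nx))
  (Bw : 'M[R]_(nx, nw)) (Dw : 'M[R]_(ny, nw)) (L : 'M[R]_(nx, ny)) :
  spec_rad_lt1 (A - L *m C) ->
  forall y : 'cV_ny, 0 <= (y^T *m Sigma_r A C Bw Dw L *m y) 0 0.
Proof.
move=> HF y.
rewrite /Sigma_r mulmxDr mulmxDl mxE.
apply: addr_ge0; last exact: sqform_ge0.
have -> : y^T *m (C *m Sigma_x A C Bw Dw L *m C^T) *m y
          = (y^T *m C) *m Sigma_x A C Bw Dw L *m (y^T *m C)^T.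
  by rewrite trmx_mul trmxK !mulmxA.
rewrite /Sigma_x.
set P := (X in xget 0 X).
case: (pselect (exists S, P S)) => [ex|nex].
  have HX := xgetPex 0 ex.
  exact: (@lyap_psd R _ _ _ _ _ HF HX (y^T *m C)).
rewrite xgetPN; last by move=> S PS; apply: nex; exists S.
by rewrite mulmx0 mul0mx mxE.
Qed.
End Forms.



Section InfSup.
Variable R : realType.

Definition qv n (Q : 'M[R]_n) (a : 'cV[R]_n) := (a^T *m Q *m a) 0 0.
Arguments qv {n}.

Lemma qv_lin n (Q M : 'M[R]_n) lam a : qv (Q - lam *: M) a = qv Q a - lam * qv M a.
Proof.
by rewrite /qv mulmxBr mulmxBl -scalemxAr -scalemxAl !mxE.
Qed.

Lemma qv_scale n (Q : 'M[R]_n) c a : qv Q (c *: a) = c ^+ 2 * qv Q a.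
Proof.
rewrite /qv; have -> : (c *: a)^T = c *: a^T by apply/matrixP => i j; rewrite !mxE.
by rewrite -!scalemxAl -scalemxAr scalerA mxE expr2.
Qed.

Lemma inf_eq_sup n (Q M : 'M[R]_n) :
  (forall a, 0 <= qv Q a) -> (forall a, 0 <= qv M a) ->
  ereal_inf [set (qv Q a)%:E | a in [set a | 1 <= qv M a]] =
  ereal_sup [set lam%:E | lam in [set lam : R | 0 <= lam /\ psd (Q - lam *: M)]].
Proof.
move=> Qp Mp.
set I := ereal_inf _.
have stepA : forall lam, 0 <= lam -> psd (Q - lam *: M) <-> (lam%:E <= I)%E.
  move=> lam l0; split.
    move=> Hp; apply: le_ereal_inf_tmp => _ [a /= Ha <-].
    have := Hp a; rewrite -/(qv _ a) qv_lin => h.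
    rewrite lee_fin; nra.
  move=> HI v; rewrite -/(qv _ v) qv_lin.
  have := Mp v; rewrite le_eqVlt => /orP[/eqP <-|mp].
    by rewrite mulr0 subr0.
  set t := Num.sqrt (qv M v).
  have t0 : 0 < t by rewrite sqrtr_gt0.
  have tt : t ^+ 2 = qv M v by rewrite sqr_sqrtr // ltW.
  have ma : qv M (t^-1 *: v) = 1 by rewrite qv_scale exprVn tt mulVf // gt_eqF.
  have : (lam%:E <= (qv Q (t^-1 *: v))%:E)%E.
    apply: (le_trans HI); apply: ereal_inf_lbound; exists (t^-1 *: v) => //=.
    by rewrite ma.
  rewrite lee_fin qv_scale exprVn tt => h.
  have h2 : lam * qv M v <= (qv M v)^-1 * qv Q v * qv M v by rewrite ler_wpM2r // ltW.
  rewrite mulrAC mulVf ?gt_eqF // mul1r in h2.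
  lra.
have I0 : (0 <= I)%E.
  by apply: le_ereal_inf_tmp => _ [a _ <-]; rewrite lee_fin.
apply: le_anti; apply/andP; split; last first.
  apply: ge_ereal_sup => _ [lam [l0 Hp] <-].
  by apply/stepA.
move: I0 stepA; case: I => [r| |] // I0 stepA.
- apply: ereal_sup_ubound; exists r => //; split; first by rewrite -lee_fin.
  by apply/stepA; rewrite // -lee_fin.
- set s := ereal_sup _.
  have ub : forall lam, 0 <= lam -> (lam%:E <= s)%E.
    move=> lam l0; apply: ereal_sup_ubound; exists lam => //; split => //.
    by apply/stepA => //; rewrite leey.
  move: ub; case: s => [x| |] ub //.
  + have h1 := ub (`|x| + 1)%R ltac:(by apply: addr_ge0); rewrite lee_fin in h1.
    have h2 := ler_norm x; exfalso; clear -h1 h2; lra.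
  + by have := ub 0 (lexx 0).
Qed.
End InfSup.
Arguments qv {R n}.
Arguments inf_eq_sup {R n Q M}.
Arguments form_inv_psd {R n S}.
Arguments Sigma_r_psd {R nx ny nw A C Bw Dw L}.


Theorem lemma1 (R : realType) (nx ny nw na : nat)
  (A : 'M[R]_nx) (C : 'M[R]_(ny, nx)) (Bw : 'M[R]_(nx, nw)) (Dw : 'M[R]_(ny, nw))
  (W : 'M[R]_ny) (j : 'I_na -> 'I_ny) (k : time) :
  detectable A C ->
  stabilizable A Bw ->
  W^T = W -> psd W ->
  {homo j : a b / (a < b)%N >-> (a < b)%N} ->
  (forall L : 'M[R]_(nx, ny), spec_rad_lt1 (A - L *m C) ->
     Sigma_r A C Bw Dw L \in unitmx) ->
  (k = TFin 0 \/ k = TFin 1 \/ k = TInf) ->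
  (forall L : 'M[R]_(nx, ny), spec_rad_lt1 (A - L *m C) ->
     Jk A C Bw Dw W j k L = Jlmi A C Bw Dw W j k L)
  /\
  ereal_sup [set Jk A C Bw Dw W j k L
            | L in [set L : 'M[R]_(nx, ny) | spec_rad_lt1 (A - L *m C)]]
  = ereal_sup [set lam%:E | lam in [set lam : R | 0 <= lam /\
       exists L : 'M[R]_(nx, ny), spec_rad_lt1 (A - L *m C) /\
         psd (Qmat A C Bw Dw j k L - lam *: ((Da R j)^T *m W *m Da R j))]].
Proof.
move=> _ _ _ HW _ Hunit _.
have part1 : forall L : 'M[R]_(nx, ny), spec_rad_lt1 (A - L *m C) ->
     Jk A C Bw Dw W j k L = Jlmi A C Bw Dw W j k L.
  move=> L HL.
  have Qp : forall a, 0 <= qv (Qmat A C Bw Dw j k L) a.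
    move=> a; rewrite /qv /Qmat -scalemxAr -scalemxAl mxE.
    apply: mulr_ge0; first by rewrite invr_ge0 ler0n.
    set u := Phi A C k L *m Da R j *m a.
    have -> : a^T *m ((Da R j)^T *m (Phi A C k L)^T *m invmx (Sigma_r A C Bw Dw L)
            *m Phi A C k L *m Da R j) *m a = u^T *m invmx (Sigma_r A C Bw Dw L) *m u.
      by rewrite /u !trmx_mul !mulmxA.
    exact: (form_inv_psd (Hunit L HL) (Sigma_r_psd HL)).
  have Mp : forall a, 0 <= qv ((Da R j)^T *m W *m Da R j) a.
    move=> a; rewrite /qv.
    have -> : a^T *m ((Da R j)^T *m W *m Da R j) *m a = (Da R j *m a)^T *m W *m (Da R j *m a).
      by rewrite !trmx_mul !mulmxA.
    exact: HW.
  exact: (inf_eq_sup Qp Mp).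
split => //.
apply: le_anti; apply/andP; split.
  apply: ge_ereal_sup => _ [L HL <-].
  rewrite part1 //; apply: ereal_sup_le => _ [lam [l0 Hp] <-].
  by exists lam => //; split => //; exists L.
apply: ge_ereal_sup => _ [lam [l0 [L [HL Hp]]] <-].
apply: (@le_trans _ _ (Jk A C Bw Dw W j k L)); last first.
  by apply: ereal_sup_ubound; exists L.
rewrite part1 //; apply: ereal_sup_ubound; exists lam => //.
Qed.
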